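(* Let $H$ be a digraph and $\delta>0$. If $2a_S\ge|S|$ for all $S\in\mathcal S_H$, then $G(H,\delta)$ is obtained when $y_1=1$. Similarly, if $2b_S\ge|S|$ for all $S\in\mathcal S_H$, then $G(H,\delta)$ is obtained when $y_2=1$.
   Context: A digraph has no self-loops and at most one directed edge per ordered pair; degree = in-degree + out-degree; $\Delta$ is the maximum degree of $H$. $H^*$ is the induced subgraph on vertices of degree $\Delta$; $\mathcal S_H$ is the collection of independent sets of $H^*$ (including $\emptyset$). For $S\in\mathcal S_H$ let $T=\mathsf N(S)$ be the vertices outside $S$ adjacent in either direction to $S$, $\mathsf E(S,T)$ and $\mathsf E(T,S)$ the sets of edges from $S$ to $T$ and from $T$ to $S$, and $F_S$ the bipartite digraph on $S\cup T$ with edges $\mathsf E(S,T)\cup\mathsf E(T,S)$. A maximum fractional matching of $F_S$ is $w:\mathsf E(F_S)\to[0,1]$ with $\sum_{e\ni v}w(e)\le1$ for all vertices and equality for $v\in S$; $a_S=\max_w\sum_{e\in\mathsf E(S,T)}w(e)$, $b_S=\max_w\sum_{e\in\mathsf E(T,S)}w(e)$ over such $w$. $\mathsf v^+(S),\mathsf v^-(S),\mathsf v^{\pm}(S)$ count vertices of $S$ with no in-neighbours, no out-neighbours, and both, in $H$. \[ g_H(x_1,x_2,y_1,y_2)=\sum_{S\in\mathcal S_H}x_1^{\mathsf v^+(S)}x_2^{\mathsf v^-(S)}(x_1\wedge x_2)^{\mathsf v^{\pm}(S)}y_1^{a_S}y_2^{b_S}, \] \[ G(H,\delta)=\inf_{x_1,x_2\ge0,\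 0\le y_1,y_2\le1}\{x_1y_1+x_2y_2:g_H(x_1,x_2,y_1,y_2)=1+\delta\}. \] ''Obtained when $y_1=1$'' means restricting the infimum to $y_1=1$ does not change its value (similarly for $y_2$). *)

(* Defs.v *)
From HB Require Import structures.
From mathcomp Require Import all_boot all_order all_algebra.
From mathcomp Require Import classical_sets boolp reals exp.
Set Implicit Arguments. Unset Strict Implicit. Unset Printing Implicit Defensive.
Import Order.TTheory GRing.Theory Num.Theory.
Local Open Scope ring_scope.
Local Open Scope classical_set_scope.

(* A digraph on a finite vertex type V is an edge relation E : rel V
   (E u v means there is an edge u -> v); no self-loops is the hypothesis
   irreflexive E, at most one edge per ordered pair is automatic. *)

Section Digraph.
Variables (V : finType) (E : rel V).

Definition deg (v : V) : nat := #|[set u | E v u]| + #|[set u | E u v]|.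

Definition Delta : nat := \max_(v : V) deg v.

(* S is an independent set of H^* (induced subgraph on vertices of degree Delta) *)
Definition indepHstar (S : {set V}) : bool :=
  (S \subset [set v | deg v == Delta]) &&
  [forall u in S, forall v in S, ~~ E u v].

Definition nbh (S : {set V}) : {set V} :=
  [set v | (v \notin S) && [exists u in S, E u v || E v u]].

Definition FE (S : {set V}) (u v : V) : bool :=
  E u v && (((u \in S) && (v \in nbh S)) || ((u \in nbh S) && (v \in S))).

Section Real.
Variable R : realType.

Definition wsum (S : {set V}) (w : V -> V -> R) (v : V) : R :=
  \sum_(u | FE S v u) w v u + \sum_(u | FE S u v) w u v.

Definition maxfracmatch (S : {set V}) (w : V -> V -> R) : Prop :=
  [/\ forall u v, FE S u v -> 0 <= w u v <= 1,
      forall v, wsum S w v <= 1 &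
      forall v, v \in S -> wsum S w v = 1].

Definition wST (S : {set V}) (w : V -> V -> R) : R :=
  \sum_(u in S) \sum_(v in nbh S | E u v) w u v.
Definition wTS (S : {set V}) (w : V -> V -> R) : R :=
  \sum_(u in nbh S) \sum_(v in S | E u v) w u v.

Definition a_S (S : {set V}) : R :=
  sup [set wST S w | w in [set w | maxfracmatch S w]].
Definition b_S (S : {set V}) : R :=
  sup [set wTS S w | w in [set w | maxfracmatch S w]].

Definition vplus (S : {set V}) : nat := #|[set v in S | [forall u, ~~ E u v]]|.
Definition vminus (S : {set V}) : nat := #|[set v in S | [forall u, ~~ E v u]]|.
Definition vpm (S : {set V}) : nat :=
  #|[set v in S | [exists u, E u v] && [exists u, E v u]]|.

Definition gH (x1 x2 y1 y2 : R) : R :=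
  \sum_(S : {set V} | indepHstar S)
     x1 ^+ vplus S * x2 ^+ vminus S * (Num.min x1 x2) ^+ vpm S
     * y1 `^ a_S S * y2 `^ b_S S.

Definition GH (delta : R) : R :=
  inf [set t | exists x1 x2 y1 y2 : R,
        [/\ 0 <= x1, 0 <= x2, 0 <= y1 <= 1, 0 <= y2 <= 1 &
            gH x1 x2 y1 y2 = 1 + delta] /\ t = x1 * y1 + x2 * y2].

Definition GH_y1 (delta : R) : R :=
  inf [set t | exists x1 x2 y2 : R,
        [/\ 0 <= x1, 0 <= x2, 0 <= y2 <= 1,
            gH x1 x2 1 y2 = 1 + delta & t = x1 * 1 + x2 * y2]].

Definition GH_y2 (delta : R) : R :=
  inf [set t | exists x1 x2 y1 : R,
        [/\ 0 <= x1, 0 <= x2, 0 <= y1 <= 1,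
            gH x1 x2 y1 1 = 1 + delta & t = x1 * y1 + x2 * 1]].

End Real.
End Digraph.

(* Main.v *)
Require Import Defs.
From HB Require Import structures.
From mathcomp Require Import all_boot all_order all_algebra.
From mathcomp Require Import classical_sets boolp reals exp.
From mathcomp Require Import ring lra zify.
From mathcomp Require polyrcf.
Import Order.TTheory GRing.Theory Num.Theory.
Local Open Scope classical_set_scope.
Local Open Scope ring_scope.

Section Term.
Variable R : realType.
Implicit Types (a b s c : R).

Definition term (p m q : nat) a b x1 x2 y1 y2 : R :=
  x1 ^+ p * x2 ^+ m * Num.min x1 x2 ^+ q * y1 `^ a * y2 `^ b.

Lemma term_ge0 p m q a b x1 x2 y1 y2 : 0 <= x1 -> 0 <= x2 ->
  0 <= term p m q a b x1 x2 y1 y2.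
Proof.
move=> h1 h2; rewrite /term.
have hm : 0 <= Num.min x1 x2 by rewrite le_min h1 h2.
by rewrite !mulr_ge0 ?exprn_ge0 ?powR_ge0.
Qed.

Lemma powR_anti s e1 e2 : 0 <= s <= 1 -> 0 <= e1 <= e2 -> s `^ e2 <= s `^ e1.
Proof.
case/andP=> s0 s1 /andP[e10 e12].
have [sz|sn] := eqVneq s 0.
  rewrite sz /powR eqxx.
  have [e1z|e1n] := eqVneq e1 0; first by case: (e2 == 0).
  have e2p : 0 < e2 by apply: lt_le_trans e12; rewrite lt_neqAle eq_sym e1n e10.
  by rewrite (gt_eqF e2p).
by apply: ger_powR => //; rewrite lt_neqAle eq_sym sn s0 s1.
Qed.

Lemma powR_le1 s e : 0 <= s <= 1 -> 0 <= e -> s `^ e <= 1.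
Proof.
by move=> hs he; rewrite -(powRr0 s); apply: powR_anti => //; rewrite lexx he.
Qed.

Lemma scale_pow c r1 r2 a b (n : nat) : 0 < c <= 1 -> 0 <= r1 -> 0 <= r2 ->
  n%:R <= a + b ->
  (c * r1) `^ a * (c * r2) `^ b <= c ^+ n * (r1 `^ a * r2 `^ b).
Proof.
case/andP=> c0 c1 h1 h2 hn.
rewrite !powRM ?(ltW c0) //.
have -> : c `^ a * r1 `^ a * (c `^ b * r2 `^ b) =
   (c `^ a * c `^ b) * (r1 `^ a * r2 `^ b) by ring.
rewrite -powRD; last by rewrite (lt0r_neq0 c0) implybT.
apply: ler_wpM2r; first by rewrite mulr_ge0 ?powR_ge0.
rewrite -powR_mulrn ?(ltW c0) //; apply: powR_anti.
  by rewrite (ltW c0) c1.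
by rewrite ler0n hn.
Qed.

Lemma term_scale p m q a b x1 x2 c r1 r2 : 0 <= x1 -> 0 <= x2 ->
  0 < c <= 1 -> 0 <= r1 -> 0 <= r2 -> (p + m + q)%:R <= a + b ->
  term p m q a b x1 x2 (c * r1) (c * r2) <= term p m q a b (x1 * c) (x2 * c) r1 r2.
Proof.
move=> h1 h2 hc hr1 hr2 hn; have c0 : 0 <= c by case/andP: hc => /ltW.
rewrite /term -minr_pMl // !exprMn.
set K := x1 ^+ p * x2 ^+ m * Num.min x1 x2 ^+ q.
have -> : K * (c * r1) `^ a * (c * r2) `^ b = K * ((c * r1) `^ a * (c * r2) `^ b).
  by rewrite mulrA.
have -> : x1 ^+ p * c ^+ p * (x2 ^+ m * c ^+ m) * (Num.min x1 x2 ^+ q * c ^+ q) *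
    r1 `^ a * r2 `^ b = K * (c ^+ (p + m + q) * (r1 `^ a * r2 `^ b)).
  by rewrite !exprD /K; ring.
apply: ler_wpM2l; first by rewrite /K !mulr_ge0 ?exprn_ge0 // le_min h1 h2.
exact: scale_pow.
Qed.

Lemma term_y0 p m q a b x1 x2 : 0 <= x1 -> 0 <= x2 -> (p + m + q)%:R <= 2 * a ->
  term p m q a b x1 x2 0 0 <= term p m q a b 0 0 1 0.
Proof.
move=> h1 h2 hn.
have [n0|npos] := eqVneq (p + m + q)%N 0%N.
  have p0 : p = 0%N by lia.
  have m0 : m = 0%N by lia.
  have q0 : q = 0%N by lia.
  rewrite /term p0 m0 q0 !expr0 !mul1r powR1.
  apply: ler_wpM2r; first exact: powR_ge0.
  by rewrite /powR eqxx; case: (a == 0).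
have ap : 0 < a.
  have : (0 : R) < (p + m + q)%:R by rewrite ltr0n lt0n.
  lra.
rewrite {1}/term powR0 ?lt0r_neq0 // mulr0 mul0r.
by apply: term_ge0.
Qed.

Lemma term_caseb p m q a b u1 u2 s : 0 <= u1 -> 0 <= u2 -> 0 <= s <= 1 ->
  u2 <= u1 * s -> p%:R <= a ->
  term p m q a b u1 u2 s 1 <= term p m q a b (u1 * s) u2 1 1.
Proof.
move=> h1 h2 hs hu hp; case/andP: (hs) => s0 s1.
have u21 : u2 <= u1.
  apply: le_trans hu _; rewrite -{2}(mulr1 u1); exact: ler_wpM2l.
rewrite /term powR1 !mulr1.
have -> : Num.min u1 u2 = u2 by apply/min_idPr.
have -> : Num.min (u1 * s) u2 = u2 by apply/min_idPr.
rewrite exprMn.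
have -> : u1 ^+ p * s ^+ p * u2 ^+ m * u2 ^+ q = (u1 ^+ p * u2 ^+ m * u2 ^+ q) * s ^+ p by ring.
apply: ler_wpM2l; first by rewrite !mulr_ge0 ?exprn_ge0.
rewrite -powR_mulrn //; apply: powR_anti => //.
by rewrite ler0n hp.
Qed.

End Term.
Arguments term {R}.


Section Poly.
Variable R : realType.

Lemma prod_le (X Y Z : R) i j : 0 <= X <= Z -> 0 <= Y <= Z ->
  X ^+ i * Y ^+ j <= Z ^+ (i + j).
Proof.
case/andP=> X0 XZ /andP[Y0 YZ]; rewrite exprD.
have Z0 : 0 <= Z by apply: le_trans XZ.
by apply: ler_pM; rewrite ?exprn_ge0 //; apply: lerXn2r; rewrite // nnegrE.
Qed.

Lemma poly_caseA (A B s M : R) p k : 0 <= A -> 0 <= B -> 0 <= s -> 0 <= M ->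
  A * B * s <= M * M -> A * s * (A * s) <= M * M -> B * B * s <= M * M ->
  (A ^+ p * B ^+ k) ^+ 2 * s ^+ (maxn (p + p) (p + k)) <= M ^+ ((p + k) + (p + k)).
Proof.
move=> A0 B0 s0 M0 h1 h2 h3.
have [kp|pk] := leqP k p.
  have -> : maxn (p + p) (p + k) = (p + p)%N by apply/maxn_idPl; lia.
  have [d ->] : exists d, p = (k + d)%N by exists (p - k)%N; lia.
  have := @prod_le (A * B * s) (A * s * (A * s)) (M * M) (k + k) d.
  rewrite !mulr_ge0 // h1 h2 => /(_ isT isT).
  have -> : (M * M) ^+ (k + k + d) = M ^+ (k + d + k + (k + d + k)).
    by rewrite !exprD !exprMn; ring.
  move=> H; apply: le_trans H; rewrite le_eqVlt; apply/orP; left; apply/eqP.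
  by rewrite !exprD !exprMn; ring.
have [d ->] : exists d, k = (p + d)%N by exists (k - p)%N; lia.
have -> : maxn (p + p) (p + (p + d)) = (p + (p + d))%N by apply/maxn_idPr; lia.
have := @prod_le (A * B * s) (B * B * s) (M * M) (p + p) d.
rewrite !mulr_ge0 // h1 h3 => /(_ isT isT).
have -> : (M * M) ^+ (p + p + d) = M ^+ (p + (p + d) + (p + (p + d))).
  by rewrite !exprD !exprMn; ring.
move=> H; apply: le_trans H; rewrite le_eqVlt; apply/orP; left; apply/eqP.
by rewrite !exprD !exprMn; ring.
Qed.

Lemma poly_caseB (A B s M : R) j m : 0 <= A -> 0 <= B -> 0 <= s -> 0 <= M ->
  (m <= j)%N -> A * B * s <= M * M -> A * A * s <= M * M ->
  (A ^+ j * B ^+ m) ^+ 2 * s ^+ (j + m) <= M ^+ ((j + m) + (j + m)).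
Proof.
move=> A0 B0 s0 M0 mj h1 h2.
have [d ->] : exists d, j = (m + d)%N by exists (j - m)%N; lia.
have := @prod_le (A * B * s) (A * A * s) (M * M) (m + m) d.
rewrite !mulr_ge0 // h1 h2 => /(_ isT isT).
have -> : (M * M) ^+ (m + m + d) = M ^+ (m + d + m + (m + d + m)).
  by rewrite !exprD !exprMn; ring.
move=> H; apply: le_trans H; rewrite le_eqVlt; apply/orP; left; apply/eqP.
by rewrite !exprD !exprMn; ring.
Qed.

Lemma term_casec p m q a b (u1 u2 s : R) : 0 <= u1 -> 0 <= u2 -> 0 <= s <= 1 ->
  u1 * s <= u2 -> p%:R <= a -> (p + m + q)%:R <= 2 * a -> (m <= p + q)%N ->
  term p m q a b u1 u2 s 1 <=
  term p m q a b ((u1 * s + u2) / 2) ((u1 * s + u2) / 2) 1 1.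
Proof.
move=> h1 h2 hs hu hp hn hm; case/andP: (hs) => s0 s1.
set M := (u1 * s + u2) / 2.
have M0 : 0 <= M by rewrite /M divr_ge0 // addr_ge0 // mulr_ge0.
rewrite /term powR1 !mulr1 minxx -!exprD.
set N := maxn (p + p) (p + m + q).
set K := u1 ^+ p * u2 ^+ m * Num.min u1 u2 ^+ q.
have K0 : 0 <= K by rewrite /K !mulr_ge0 ?exprn_ge0 // le_min h1 h2.
rewrite -ler_sqr ?nnegrE ?mulr_ge0 ?powR_ge0 ?exprn_ge0 //.
have hsa : (s `^ a) ^+ 2 <= s ^+ N.
  rewrite -[X in X <= _]powR_mulrn ?powR_ge0 // -powRrM -powR_mulrn //.
  apply: powR_anti => //; rewrite ler0n /= /N.
  have : ((maxn (p + p) (p + m + q))%:R : R) <= a * 2.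
    by rewrite /maxn; case: ifP => _; [lra | rewrite natrD; lra].
  done.
apply: (@le_trans _ _ (K ^+ 2 * s ^+ N)).
  by rewrite exprMn ler_wpM2l ?exprn_ge0.
rewrite -exprM muln2 -addnn.
have hAB : u1 * u2 * s <= M * M.
  rewrite /M; have := sqr_ge0 (u1 * s - u2); nra.
have [u21|u12] := leP u2 u1.
  have -> : K = u1 ^+ p * u2 ^+ (m + q) by rewrite /K (min_idPr u21) exprD mulrA.
  rewrite /N -addnA; apply: poly_caseA => //.
    have h : u1 * s <= M by rewrite /M; lra.
    have : 0 <= u1 * s by rewrite mulr_ge0.
    nra.
  have h : u2 * s <= u1 * s by rewrite ler_wpM2r.
  have hM : (u2 * s + u2) / 2 <= M by rewrite /M; lra.
  have h0 : 0 <= (u2 * s + u2) / 2 by rewrite divr_ge0 // addr_ge0 // mulr_ge0.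
  have hMM : (u2 * s + u2) / 2 * ((u2 * s + u2) / 2) <= M * M by apply: ler_pM.
  have : u2 * u2 * s <= (u2 * s + u2) / 2 * ((u2 * s + u2) / 2).
    rewrite -subr_ge0.
    have -> : (u2 * s + u2) / 2 * ((u2 * s + u2) / 2) - u2 * u2 * s = (u2 * (1 - s)) ^+ 2 / 4 by field.
    by rewrite divr_ge0 // sqr_ge0.
  lra.
have -> : K = u1 ^+ (p + q) * u2 ^+ m.
  by rewrite /K (min_idPl (ltW u12)) exprD; ring.
have -> : (p + m + q = p + q + m)%N by lia.
apply: (@le_trans _ _ ((u1 ^+ (p + q) * u2 ^+ m) ^+ 2 * s ^+ (p + q + m))).
  apply: ler_wpM2l; first by rewrite exprn_ge0 // mulr_ge0 ?exprn_ge0.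
  rewrite -!powR_mulrn //; apply: powR_anti => //.
  by rewrite ler0n /= ler_nat /N; lia.
apply: poly_caseB => //.
have h : u1 <= u2 := ltW u12.
have hM : (u1 * s + u1) / 2 <= M by rewrite /M; lra.
have h0 : 0 <= (u1 * s + u1) / 2 by rewrite divr_ge0 // addr_ge0 // mulr_ge0.
have hMM : (u1 * s + u1) / 2 * ((u1 * s + u1) / 2) <= M * M by apply: ler_pM.
have : u1 * u1 * s <= (u1 * s + u1) / 2 * ((u1 * s + u1) / 2).
  rewrite -subr_ge0.
  have -> : (u1 * s + u1) / 2 * ((u1 * s + u1) / 2) - u1 * u1 * s = (u1 * (1 - s)) ^+ 2 / 4 by field.
  by rewrite divr_ge0 // sqr_ge0.
lra.
by rewrite le_min h1 h2.
Qed.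

End Poly.


Section Abstract.
Variable R : realType.
Variables (I : finType) (P : pred I) (p m q : I -> nat) (a b : I -> R) (delta : R).

Definition Fa (x1 x2 y1 y2 : R) : R :=
  \sum_(i | P i) x1 ^+ p i * x2 ^+ m i * Num.min x1 x2 ^+ q i * y1 `^ a i * y2 `^ b i.

Definition good := forall i, P i -> [/\ (p i)%:R <= a i, 0 <= b i,
  (p i + m i + q i)%:R <= a i + b i, (p i + m i + q i)%:R <= 2 * a i &
  (m i <= p i + q i)%N].

Lemma Fa_ge0 x1 x2 y1 y2 : 0 <= x1 -> 0 <= x2 -> 0 <= Fa x1 x2 y1 y2.
Proof. by move=> h1 h2; apply: sumr_ge0 => i _; exact: (@term_ge0 R (p i) (m i) (q i) (a i) (b i) x1 x2 y1 y2 h1 h2). Qed.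

Lemma scale_down X1 X2 Y : 0 < delta -> (forall Y, 0 <= Y <= 1 -> Fa 0 0 1 Y <= 1) ->
  0 <= X1 -> 0 <= X2 -> 0 <= Y <= 1 -> 1 + delta <= Fa X1 X2 1 Y ->
  exists l, 0 <= l <= 1 /\ Fa (l * X1) (l * X2) 1 Y = 1 + delta.
Proof.
move=> dp H0 h1 h2 hY hF.
pose pol : {poly R} := \sum_(i | P i)
  (X1 ^+ p i * X2 ^+ m i * Num.min X1 X2 ^+ q i * 1 `^ a i * Y `^ b i) *: 'X^(p i + m i + q i).
have hpol : forall l, 0 <= l -> pol.[l] = Fa (l * X1) (l * X2) 1 Y.
  move=> l l0; rewrite /pol horner_sum /Fa; apply: eq_bigr => i _.
  rewrite hornerZ hornerXn -minr_pMr // !exprMn !exprD; ring.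
have hprod : (pol - (1 + delta)%:P).[0] * (pol - (1 + delta)%:P).[1] <= 0.
  rewrite !hornerD !hornerN !hornerC !hpol ?ler01 // !mul1r !mul0r.
  have := H0 Y hY => h0.
  apply: mulr_le0_ge0; lra.
have [x xin hx] := @polyrcf.poly_ivt R (pol - (1 + delta)%:P) 0 1 ler01 hprod.
move: xin; rewrite in_itv /= => /andP[x0 x1].
exists x; split; first by rewrite x0 x1.
by move: hx; rewrite /root hornerD hornerN hornerC hpol // subr_eq0 => /eqP.
Qed.

Lemma improve x1 x2 y1 y2 : good -> 0 < delta ->
  (forall Y, 0 <= Y <= 1 -> Fa 0 0 1 Y <= 1) ->
  0 <= x1 -> 0 <= x2 -> 0 <= y1 <= 1 -> 0 <= y2 <= 1 -> Fa x1 x2 y1 y2 = 1 + delta ->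
  exists X1 X2 Y, [/\ 0 <= X1, 0 <= X2, 0 <= Y <= 1, 1 + delta <= Fa X1 X2 1 Y &
                      X1 + X2 * Y <= x1 * y1 + x2 * y2].
Proof.
move=> G dp H0 h1 h2 /andP[y10 y11] /andP[y20 y21] hF.
have [y21'|y12] := leP y2 y1.
  have [y1z|y1n] := eqVneq y1 0.
    exfalso.
    have y2z : y2 = 0 by rewrite y1z in y21'; lra.
    have hle : Fa x1 x2 0 0 <= Fa 0 0 1 0.
      apply: ler_sum => i Pi; have [_ _ _ h2a _] := G i Pi.
      exact: (@term_y0 R (p i) (m i) (q i) (a i) (b i) x1 x2 h1 h2 h2a).
    have := H0 0; rewrite lexx ler01 => /(_ isT) h0.
    move: hF; rewrite y1z y2z; lra.
  have y1p : 0 < y1 by rewrite lt_neqAle eq_sym y1n y10.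
  have e : y1 * (y2 / y1) = y2 by rewrite mulrC divfK.
  exists (x1 * y1), (x2 * y1), (y2 / y1); split.
  - by rewrite mulr_ge0.
  - by rewrite mulr_ge0.
  - by rewrite divr_ge0 // ler_pdivrMr // mul1r.
  - rewrite -hF; apply: ler_sum => i Pi; have [_ _ hab _ _] := G i Pi.
    have := @term_scale R (p i) (m i) (q i) (a i) (b i) x1 x2 y1 1 (y2 / y1) h1 h2.
    rewrite y1p y11 ler01 divr_ge0 // e mulr1 => /(_ isT isT isT hab).
    by [].
  - by rewrite -mulrA e.
have y2p : 0 < y2 by lra.
set s := y1 / y2.
have es : y2 * s = y1 by rewrite /s mulrC divfK // lt0r_neq0.
have s0 : 0 <= s by rewrite divr_ge0.
have s1 : s <= 1 by rewrite ler_pdivrMr // mul1r ltW.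
have hs : 0 <= s <= 1 by rewrite s0 s1.
set u1 := x1 * y2; set u2 := x2 * y2.
have u10 : 0 <= u1 by rewrite mulr_ge0 // ltW.
have u20 : 0 <= u2 by rewrite mulr_ge0 // ltW.
have hF1 : 1 + delta <= Fa u1 u2 s 1.
  rewrite -hF; apply: ler_sum => i Pi; have [_ _ hab _ _] := G i Pi.
  have := @term_scale R (p i) (m i) (q i) (a i) (b i) x1 x2 y2 s 1 h1 h2.
  rewrite y2p y21 ler01 s0 es mulr1 => /(_ isT isT isT hab).
  by [].
have eo : u1 * s + u2 = x1 * y1 + x2 * y2 by rewrite /u1 -mulrA es.
have [hu|hu] := leP u2 (u1 * s).
  exists (u1 * s), u2, 1; split => //.
  - by rewrite mulr_ge0.
  - by rewrite lexx ler01.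
  - apply: le_trans hF1 _; apply: ler_sum => i Pi; have [hp _ _ _ _] := G i Pi.
    exact: (@term_caseb R (p i) (m i) (q i) (a i) (b i) u1 u2 s u10 u20 hs hu hp).
  - by rewrite mulr1 eo.
exists ((u1 * s + u2) / 2), ((u1 * s + u2) / 2), 1; split.
- by rewrite divr_ge0 // addr_ge0 // mulr_ge0.
- by rewrite divr_ge0 // addr_ge0 // mulr_ge0.
- by rewrite lexx ler01.
- apply: le_trans hF1 _; apply: ler_sum => i Pi; have [hp _ _ h2a hm] := G i Pi.
  exact: (@term_casec R (p i) (m i) (q i) (a i) (b i) u1 u2 s u10 u20 hs (ltW hu) hp h2a hm).
- by rewrite -eo; lra.
Qed.

Lemma abstract_inf : good -> 0 < delta ->
  (forall Y, 0 <= Y <= 1 -> Fa 0 0 1 Y <= 1) ->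
  inf [set t | exists x1 x2 y1 y2 : R,
        [/\ 0 <= x1, 0 <= x2, 0 <= y1 <= 1, 0 <= y2 <= 1 &
            Fa x1 x2 y1 y2 = 1 + delta] /\ t = x1 * y1 + x2 * y2] =
  inf [set t | exists x1 x2 y2 : R,
        [/\ 0 <= x1, 0 <= x2, 0 <= y2 <= 1,
            Fa x1 x2 1 y2 = 1 + delta & t = x1 * 1 + x2 * y2]].
Proof.
move=> G dp H0.
set A := [set t | _]; set B := [set t | _].
have BA : forall t, B t -> A t.
  move=> t [x1 [x2 [y2 [h1 h2 hy hF ->]]]].
  by exists x1, x2, 1, y2; split => //; split => //; rewrite lexx ler01.
have key : forall t, A t -> exists2 t', B t' & t' <= t.
  move=> t [x1 [x2 [y1 [y2 [[h1 h2 hy1 hy2 hF] ->]]]]].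
  have [X1 [X2 [Y [hX1 hX2 hY hFX hobj]]]] := improve _ _ _ _ G dp H0 h1 h2 hy1 hy2 hF.
  have [l [/andP[l0 l1] hl]] := scale_down _ _ _ dp H0 hX1 hX2 hY hFX.
  exists (l * X1 * 1 + l * X2 * Y).
    exists (l * X1), (l * X2), Y; split => //; by rewrite mulr_ge0.
  apply: le_trans hobj.
  have hXY : 0 <= X2 * Y by rewrite mulr_ge0 //; case/andP: hY.
  have : l * (X1 + X2 * Y) <= X1 + X2 * Y.
    rewrite -{2}(mul1r (X1 + X2 * Y)); apply: ler_wpM2r => //; exact: addr_ge0.
  by rewrite mulr1 -mulrA; lra.
have A0 : forall t, A t -> 0 <= t.
  move=> t [x1 [x2 [y1 [y2 [[h1 h2 /andP[hy1 _] /andP[hy2 _] hF] ->]]]]].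
  by rewrite addr_ge0 // mulr_ge0.
have [[t0 At0]|nA] := pselect (exists t, A t); last first.
  have eA : A = set0 by apply/seteqP; split => t // At; apply: nA; exists t.
  have eB : B = set0 by apply/seteqP; split => t // /BA At; apply: nA; exists t.
  by rewrite eA eB.
have lbA : has_lbound A by exists 0 => t /A0.
have lbB : has_lbound B by exists 0 => t /BA /A0.
have [t1 Bt1 _] := key t0 At0.
apply/eqP; rewrite eq_le; apply/andP; split.
  apply: lb_le_inf; first by exists t1.
  by move=> t /BA At; apply: ge_inf.
apply: lb_le_inf; first by exists t0.
move=> t At; have [t' Bt' le_t] := key t At.
by apply: le_trans le_t; apply: ge_inf.
Qed.

End Abstract.


Section Comb.
Variables (R : realType) (V : finType) (E : rel V).
Implicit Types (S : {set V}) (u v : V).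

Lemma indepP {S} : indepHstar E S -> forall u v, u \in S -> v \in S -> ~~ E u v.
Proof.
case/andP=> _ /forall_inP H u v uS vS.
by move/forall_inP: (H u uS) => /(_ v vS).
Qed.

Lemma notin_nbh {S u} : u \in S -> (u \in nbh E S) = false.
Proof. by move=> uS; rewrite inE uS. Qed.

Lemma nbh_out {S u} v : indepHstar E S -> u \in S -> E u v -> v \in nbh E S.
Proof.
move=> hI uS Euv.
have vS : v \notin S by apply/negP => vS; move: (indepP hI _ _ uS vS); rewrite Euv.
by rewrite inE vS /=; apply/existsP; exists u; rewrite uS Euv.
Qed.

Lemma nbh_in {S} u {v} : indepHstar E S -> v \in S -> E u v -> u \in nbh E S.
Proof.
move=> hI vS Euv.
have uS : u \notin S by apply/negP => uS; move: (indepP hI _ _ uS vS); rewrite Euv.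
by rewrite inE uS /=; apply/existsP; exists v; rewrite vS Euv orbT.
Qed.

Lemma FE_out {S u} v : indepHstar E S -> u \in S -> FE E S u v = E u v.
Proof.
move=> hI uS; rewrite /FE uS (notin_nbh uS) /= ?andbF ?orbF.
by case Euv: (E u v) => //=; rewrite (nbh_out v hI uS Euv).
Qed.

Lemma FE_in {S} u {v} : indepHstar E S -> v \in S -> FE E S u v = E u v.
Proof.
move=> hI vS; rewrite /FE vS (notin_nbh vS) /= ?andbT ?andbF ?orbF.
by case Euv: (E u v) => //=; rewrite (nbh_in u hI vS Euv).
Qed.

Definition outw (w : V -> V -> R) v := \sum_(u | E v u) w v u.
Definition inw (w : V -> V -> R) v := \sum_(u | E u v) w u v.

Lemma wsumE {S} (w : V -> V -> R) {v} : indepHstar E S -> v \in S -> wsum E S w v = outw w v + inw w v.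
Proof.
move=> hI vS; rewrite /wsum /outw /inw; congr (_ + _); apply: eq_bigl => u.
  exact: FE_out.
exact: FE_in.
Qed.

Lemma wSTE S w : indepHstar E S -> wST E S w = \sum_(u in S) outw w u.
Proof.
move=> hI; apply: eq_bigr => u uS; apply: eq_bigl => v.
by case Euv: (E u v); rewrite ?andbF ?andbT // (nbh_out v hI uS Euv).
Qed.

Lemma wTSE S w : indepHstar E S -> wTS E S w = \sum_(v in S) inw w v.
Proof.
move=> hI; rewrite /wTS (exchange_big_dep (fun v => v \in S)) /=; last first.
  by move=> u v _ /andP[].
apply: eq_bigr => v vS; apply: eq_bigl => u.
by case Euv: (E u v); rewrite ?andbF ?andbT // (nbh_in u hI vS Euv).
Qed.

Lemma card_sumR S (c : pred V) :
  (#|[set v in S | c v]|%:R : R) = \sum_(v in S) ((c v)%:R : R).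
Proof.
rewrite -[LHS]mul1r -mulr_natr -sumr_const.
rewrite (eq_bigl (fun v => (v \in S) && c v)); last by move=> v; rewrite inE.
rewrite big_mkcondr /= !mul1r; apply: eq_bigr => v _; by case: (c v).
Qed.

Lemma match_facts S (w : V -> V -> R) : indepHstar E S -> maxfracmatch E S w ->
  [/\ wST E S w + wTS E S w = #|S|%:R, (vplus E S)%:R <= wST E S w,
      (vminus E S)%:R <= wTS E S w &
      (vplus E S + vminus E S + vpm E S)%N = #|S|].
Proof.
move=> hI [hw _ hS1].
have out0 : forall v, v \in S -> 0 <= outw w v.
  move=> v vS; apply: sumr_ge0 => u Evu.
  by case/andP: (hw v u (etrans (FE_out u hI vS) Evu)).
have in0 : forall v, v \in S -> 0 <= inw w v.
  move=> v vS; apply: sumr_ge0 => u Euv.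
  by case/andP: (hw u v (etrans (FE_in u hI vS) Euv)).
have h1 : forall v, v \in S -> outw w v + inw w v = 1.
  by move=> v vS; rewrite -(wsumE w hI vS) hS1.
have outz : forall v, [forall u, ~~ E v u] -> outw w v = 0.
  by move=> v /forallP H; rewrite /outw big_pred0 // => u; apply: negbTE.
have inz : forall v, [forall u, ~~ E u v] -> inw w v = 0.
  by move=> v /forallP H; rewrite /inw big_pred0 // => u; apply: negbTE.
split.
- rewrite wSTE // wTSE // -big_split /= -[RHS]sumr_const.
  by apply: eq_bigr => v vS; rewrite h1.
- rewrite /vplus card_sumR wSTE //; apply: ler_sum => v vS.
  case hv: [forall u, ~~ E u v] => /=; last exact: out0.
  by have := h1 v vS; rewrite inz // addr0 => ->.
- rewrite /vminus card_sumR wTSE //; apply: ler_sum => v vS.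
  case hv: [forall u, ~~ E v u] => /=; last exact: in0.
  by have := h1 v vS; rewrite outz // add0r => ->.
apply/eqP; rewrite -(eqr_nat R) !natrD /vplus /vminus /vpm !card_sumR.
rewrite -!big_split /= -[X in _ == X]sumr_const.
apply/eqP; apply: eq_bigr => v vS.
have := h1 v vS.
have fo : [forall u, ~~ E v u] = ~~ [exists u, E v u] by rewrite negb_exists.
have fi : [forall u, ~~ E u v] = ~~ [exists u, E u v] by rewrite negb_exists.
rewrite fo fi.
case hi: [exists u, E u v]; case ho: [exists u, E v u];
  rewrite /= ?mulr1n ?mulr0n ?addr0 ?add0r //.
by rewrite outz ?fo ?ho // inz ?fi ?hi // addr0 => /eqP; rewrite eq_sym oner_eq0.
Qed.

End Comb.


Section Facts.
Variables (R : realType) (V : finType) (E : rel V).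
Implicit Types (S : {set V}).

Lemma ab_facts S (w0 : V -> V -> R) : indepHstar E S -> maxfracmatch E S w0 ->
  [/\ (vplus E S)%:R <= @a_S V E R S, @a_S V E R S <= #|S|%:R - (vminus E S)%:R,
      (vminus E S)%:R <= @b_S V E R S, @b_S V E R S <= #|S|%:R - (vplus E S)%:R &
      #|S|%:R <= @a_S V E R S + @b_S V E R S].
Proof.
move=> hI hw0.
have [f1 f2 f3 f4] := @match_facts R V E S w0 hI hw0.
have ubA : ubound [set @wST V E R S w | w in [set w | maxfracmatch E S w]]
    (#|S|%:R - (vminus E S)%:R).
  apply/ubP => x [w Ww <-]; have [g1 g2 g3 g4] := @match_facts R V E S w hI Ww; lra.
have ubB : ubound [set @wTS V E R S w | w in [set w | maxfracmatch E S w]]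
    (#|S|%:R - (vplus E S)%:R).
  apply/ubP => x [w Ww <-]; have [g1 g2 g3 g4] := @match_facts R V E S w hI Ww; lra.
have inA : [set @wST V E R S w | w in [set w | maxfracmatch E S w]] (@wST V E R S w0).
  by exists w0.
have inB : [set @wTS V E R S w | w in [set w | maxfracmatch E S w]] (@wTS V E R S w0).
  by exists w0.
have hA : has_ubound [set @wST V E R S w | w in [set w | maxfracmatch E S w]].
  by exists (#|S|%:R - (vminus E S)%:R).
have hB : has_ubound [set @wTS V E R S w | w in [set w | maxfracmatch E S w]].
  by exists (#|S|%:R - (vplus E S)%:R).
have a1 := ub_le_sup hA inA.
have b1 := ub_le_sup hB inB.
have a2 := ge_sup (ex_intro _ _ inA) ubA.
have b2 := ge_sup (ex_intro _ _ inB) ubB.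
rewrite /a_S /b_S; split; lra.
Qed.

Lemma match0 : exists w : V -> V -> R, maxfracmatch E finset.set0 w.
Proof.
exists (fun _ _ => 0); split.
- by move=> u v _; rewrite lexx ler01.
- by move=> v; rewrite /wsum !big1 // addr0 ler01.
- by move=> v; rewrite finset.in_set0.
Qed.

Lemma match_exists S : indepHstar E S ->
  (#|S|%:R <= 2 * @a_S V E R S \/ #|S|%:R <= 2 * @b_S V E R S) ->
  exists w : V -> V -> R, maxfracmatch E S w.
Proof.
move=> hI hab.
have [//|nw] := pselect (exists w : V -> V -> R, maxfracmatch E S w).
have eW : [set w : V -> V -> R | maxfracmatch E S w] = set0.
  by apply/seteqP; split => w // Ww; apply: nw; exists w.
have ea : @a_S V E R S = 0 by rewrite /a_S eW image_set0 sup0.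
have eb : @b_S V E R S = 0 by rewrite /b_S eW image_set0 sup0.
have hS : (#|S|%:R : R) <= 0 by move: hab; rewrite ea eb mulr0; case.
have S0 : S = finset.set0.
  apply/eqP; rewrite -cards_eq0 -(eqr_nat R) eq_le hS /=.
  by rewrite ler0n.
by move: nw; rewrite S0 => nw; exfalso; apply: nw; exact: match0.
Qed.

End Facts.


Section Final.
Variables (R : realType) (V : finType) (E : rel V).
Implicit Types (S : {set V}).

Lemma indep0 : indepHstar E finset.set0.
Proof.
rewrite /indepHstar; apply/andP; split; first by apply/fintype.subsetP => x; rewrite finset.in_set0.
apply/forall_inP => u.
by rewrite finset.in_set0.
Qed.

Lemma gH0 : (forall S, indepHstar E S -> exists w : V -> V -> R, maxfracmatch E S w) ->
  forall y1 y2 : R, @gH V E R 0 0 y1 y2 <= 1.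
Proof.
move=> hm y1 y2; rewrite /gH (bigD1 finset.set0) ?indep0 //=.
rewrite big1 ?addr0; last first.
  move=> S /andP[hI S0]; have [w hw] := hm S hI.
  have [_ _ _ f4] := @match_facts R V E S w hI hw.
  have npos : (0 < vplus E S + vminus E S + vpm E S)%N by rewrite f4 card_gt0.
  rewrite minxx !expr0n.
  case: eqP => hp; case: eqP => hq; case: eqP => hr; rewrite /= ?mulr0n ?mulr1n;
    try (exfalso; lia); by rewrite ?mul0r ?mulr0 ?mul1r ?mul0r.
have [w hw] := hm _ indep0.
have [f1 f2 f3 f4 f5] := @ab_facts R V E _ w indep0 hw.
have [_ _ _ g4] := @match_facts R V E _ w indep0 hw.
rewrite cards0 in g4 f2 f4 f5.
have hp : vplus E finset.set0 = 0%N by lia.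
have hq : vminus E finset.set0 = 0%N by lia.
have hr : vpm E finset.set0 = 0%N by lia.
rewrite hp hq hr in f1 f2 f3 f4 *.
have -> : @a_S V E R finset.set0 = 0 by lra.
have -> : @b_S V E R finset.set0 = 0 by lra.
by rewrite !expr0 !powRr0 !mul1r.
Qed.

End Final.


Lemma gH_swap (R : realType) (V : finType) (E : rel V) (x1 x2 y1 y2 : R) :
  gH E x1 x2 y1 y2 =
  Fa R _ (indepHstar E) (vminus E) (vplus E) (vpm E) (@b_S V E R) (@a_S V E R) x2 x1 y2 y1.
Proof.
rewrite /gH /Fa; apply: eq_bigr => S _.
rewrite minC.
set A1 := x1 ^+ _; set A2 := x2 ^+ _; set A3 := Num.min _ _ ^+ _.
set B1 := y1 `^ _; set B2 := y2 `^ _.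
ring.
Qed.

Theorem proposition5p7 (R : realType) (V : finType) (E : rel V)
  (hE : irreflexive E) (delta : R) (hdelta : 0 < delta) :
  ((forall S : {set V}, indepHstar E S -> (#|S|)%:R <= 2 * @a_S V E R S) ->
     GH E delta = GH_y1 E delta) /\
  ((forall S : {set V}, indepHstar E S -> (#|S|)%:R <= 2 * @b_S V E R S) ->
     GH E delta = GH_y2 E delta).
Proof.
split=> hyp.
- have hm : forall S, indepHstar E S -> exists w : V -> V -> R, maxfracmatch E S w.
    by move=> S hI; exact: (@match_exists R V E S hI (or_introl (hyp S hI))).
  have G : good R _ (indepHstar E) (vplus E) (vminus E) (vpm E) (@a_S V E R) (@b_S V E R).
    move=> S hI; have [w hw] := hm S hI.
    have [f1 f2 f3 f4 f5] := @ab_facts R V E S w hI hw.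
    have [_ _ _ g4] := @match_facts R V E S w hI hw.
    have h := hyp S hI.
    have hm0 := ler0n R (vminus E S).
    have eS : (#|S|%:R : R) = (vplus E S)%:R + (vminus E S)%:R + (vpm E S)%:R.
      by rewrite -g4 !natrD.
    rewrite g4; split => //; first lra.
    rewrite -(ler_nat R) natrD; lra.
  have H0 : forall Y, 0 <= Y <= 1 ->
      Fa R _ (indepHstar E) (vplus E) (vminus E) (vpm E) (@a_S V E R) (@b_S V E R) 0 0 1 Y <= 1.
    by move=> Y _; apply: (@gH0 R V E hm 1 Y).
  exact: (@abstract_inf R _ _ _ _ _ _ _ delta G hdelta H0).
have hm : forall S, indepHstar E S -> exists w : V -> V -> R, maxfracmatch E S w.
  by move=> S hI; exact: (@match_exists R V E S hI (or_intror (hyp S hI))).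
have G : good R _ (indepHstar E) (vminus E) (vplus E) (vpm E) (@b_S V E R) (@a_S V E R).
  move=> S hI; have [w hw] := hm S hI.
  have [f1 f2 f3 f4 f5] := @ab_facts R V E S w hI hw.
  have [_ _ _ g4] := @match_facts R V E S w hI hw.
  have h := hyp S hI.
  have hp0 := ler0n R (vplus E S).
  have eS : (#|S|%:R : R) = (vplus E S)%:R + (vminus E S)%:R + (vpm E S)%:R.
    by rewrite -g4 !natrD.
  have g4' : (vminus E S + vplus E S + vpm E S)%N = #|S| by rewrite -g4; lia.
  rewrite g4'; split => //; [lra | lra | ].
  rewrite -(ler_nat R) natrD; lra.
have H0 : forall Y, 0 <= Y <= 1 ->
    Fa R _ (indepHstar E) (vminus E) (vplus E) (vpm E) (@b_S V E R) (@a_S V E R) 0 0 1 Y <= 1.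
  by move=> Y _; rewrite -gH_swap; apply: (@gH0 R V E hm Y 1).
have habs := @abstract_inf R _ _ _ _ _ _ _ delta G hdelta H0.
rewrite /GH /GH_y2.
apply: (etrans _ (etrans habs _)).
  congr inf; apply/seteqP; split => t.
    move=> [x1 [x2 [y1 [y2 [[h1 h2 hy1 hy2 hF] ->]]]]].
    exists x2, x1, y2, y1; split; last by rewrite addrC.
    by split => //; rewrite -gH_swap.
  move=> [x1 [x2 [y1 [y2 [[h1 h2 hy1 hy2 hF] ->]]]]].
  exists x2, x1, y2, y1; split; last by rewrite addrC.
  by split => //; rewrite gH_swap.
congr inf; apply/seteqP; split => t.
  move=> [x1 [x2 [y2 [h1 h2 hy2 hF ->]]]].
  exists x2, x1, y2; split => //; last by rewrite addrC.
  by rewrite gH_swap.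
move=> [x1 [x2 [y1 [h1 h2 hy1 hF ->]]]].
exists x2, x1, y1; split => //; last by rewrite addrC.
by rewrite -gH_swap.
Qed.
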